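(* For every $n$ there is an instance of $P2\|C_{\max}$ with $3n+1$ jobs and an initial schedule from which a sequence of improving 3-swaps, each interchanging exactly three jobs between the two machines, has length $2^{\Omega(n)}$ before a 3-swap optimal solution is reached; i.e., the number of improving 3-swaps until a 3-swap optimal solution is reached can be $2^{\Omega(n)}$.
   Context: Problem $P2\|C_{\max}$: jobs with processing times $p_j>0$, two identical machines. A schedule $\sigma=(M_1,M_2)$ partitions the jobs into the sets processed on machines 1 and 2; loads $L_i=\sum_{j\in M_i}p_j$, makespan $\max_iL_i$. A 3-swap (in this statement) chooses $k'$ jobs on one machine and $k''$ jobs on the other with $k'+k''=3$ and interchanges their machine assignments; it is improving if the makespan strictly decreases. A 3-swap optimal solution is a schedule admitting no improving 3-swap. *)

(* Defs.v *)
From mathcomp Require Import all_boot.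
Set Implicit Arguments. Unset Strict Implicit. Unset Printing Implicit Defensive.

Section P2.
Variable J : finType.
Variable p : J -> nat.

(* A schedule assigns each job to machine 1 ([true]) or machine 2 ([false]). *)
Definition schedule := {ffun J -> bool}.

Definition load (s : schedule) (m : bool) : nat := \sum_(j | s j == m) p j.

Definition makespan (s : schedule) : nat := maxn (load s true) (load s false).

Definition swap (s : schedule) (S : {set J}) : schedule :=
  [ffun j => if j \in S then ~~ s j else s j].

(* s' is obtained from s by an improving 3-swap: exactly three jobs change
   machine (k' on one machine, k'' on the other, k' + k'' = 3) and the
   makespan strictly decreases. *)
Definition improving_3swap (s s' : schedule) : bool :=
  [exists S : {set J}, [&& #|S| == 3, s' == swap s S & makespan s' < makespan s]].

Definition three_swap_optimal (s : schedule) : Prop :=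
  forall S : {set J}, #|S| = 3 -> makespan s <= makespan (swap s S).
End P2.

(* Main.v *)
Require Import Defs.
From mathcomp Require Import all_boot zify.
Set Implicit Arguments. Unset Strict Implicit. Unset Printing Implicit Defensive.

Definition flip (f : nat -> bool) t a b : nat -> bool :=
  fun i => if (i == t) || (i == a) || (i == b) then ~~ f i else f i.
Definition step (f g : nat -> bool) : Prop :=
  exists t a b, [/\ b < a, a < t, f t & g =1 flip f t a b].
Definition supp w (f : nat -> bool) := forall i, w <= i -> f i = false.
Fixpoint chainw w f (l : seq (nat -> bool)) : Prop :=
  match l with [::] => True | g :: l' => [/\ step f g, supp w g & chainw w g l'] end.
Definition addbit t (f : nat -> bool) : nat -> bool := fun i => (i == t) || f i.
Definition E : nat -> bool := fun _ => false.
Definition st k : nat -> bool := fun i => (i == k + 3) || (i == k + 2).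
Definition base k : seq (nat -> bool) :=
  [:: (fun i => (i == k + 2) || (i == 1) || (i == 0)); E].
Fixpoint A (k : nat) : seq (nat -> bool) :=
  match k with
  | 0 => base 0
  | 1 => base 1
  | S (S k' as k1) => map (addbit (k' + 5)) (st k' :: A k') ++ st k1 :: A k1
  end.

Lemma A_rec k : A k.+2 = map (addbit (k + 5)) (st k :: A k) ++ st k.+1 :: A k.+1.
Proof. by []. Qed.

Ltac bcase := repeat match goal with |- context [?x == ?y] => case: (x =P y) => ? end;
  simpl; try done; try (exfalso; lia).

Lemma step_ext f f' g g' : f =1 f' -> g =1 g' -> step f g -> step f' g'.
Proof.
move=> Hf Hg [t [a [b [H1 H2 H3 H4]]]]; exists t, a, b; split => //.
  by rewrite -Hf.
by move=> i; rewrite -Hg H4 /flip Hf.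
Qed.

Lemma chainw_ext w f f' l : f =1 f' -> chainw w f l -> chainw w f' l.
Proof. by case: l => [|g l] //= Hf [H1 H2 H3]; split => //; apply: step_ext H1. Qed.

Lemma chainw_cat w f l1 l2 : chainw w f l1 -> chainw w (last f l1) l2 -> chainw w f (l1 ++ l2).
Proof.
elim: l1 f => [|g l1 IH] f //= [H1 H2 H3] H4; split => //; exact: IH.
Qed.

Lemma chainw_widen w w' f l : w <= w' -> chainw w f l -> chainw w' f l.
Proof.
move=> Hw; elim: l f => [|g l IH] f //= [H1 H2 H3]; split => //; last exact: IH.
by move=> i Hi; apply: H2; apply: leq_trans Hi.
Qed.

Lemma step_addbit w t f g : w <= t -> supp w f -> step f g -> step (addbit t f) (addbit t g).
Proof.
move=> Hwt Hs [t' [a [b [H1 H2 H3 H4]]]].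
have Ht' : t' < w by rewrite ltnNge; apply/negP => /Hs; rewrite H3.
exists t', a, b; split => //; first by rewrite /addbit H3 orbT.
move=> i; rewrite /addbit H4 /flip.
case: (i =P t) => [->|Hi] /=.
  have -> : (t == t') = false by apply/eqP; lia.
  have -> : (t == a) = false by apply/eqP; lia.
  have -> : (t == b) = false by apply/eqP; lia.
  done.
by case: ifP.
Qed.

Lemma supp_step w f g : supp w f -> step f g -> (forall i, w <= i -> g i = false).
Abort.

Lemma chainw_addbit w t f l : w <= t -> supp w f -> chainw w f l ->
  chainw t.+1 (addbit t f) (map (addbit t) l).
Proof.
move=> Hwt; elim: l f => [|g l IH] f //= Hf [H1 H2 H3]; split.
- exact: step_addbit Hwt Hf H1.
- move=> i Hi; rewrite /addbit H2; last lia.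
  have -> : (i == t) = false by apply/eqP; lia.
  done.
- exact: IH.
Qed.

Lemma supp_st k : supp (k + 4) (st k).
Proof. move=> i Hi; rewrite /st; bcase. Qed.

Lemma A_ok k : (chainw (k + 4) (st k) (A k) /\ last (st k) (A k) =1 E) /\
               (chainw (k.+1 + 4) (st k.+1) (A k.+1) /\ last (st k.+1) (A k.+1) =1 E).
Proof.
have Hbase : forall j, chainw (j + 4) (st j) (base j) /\ last (st j) (base j) =1 E.
  move=> j; split => //=; split; [|move=> i Hi; bcase|split => //].
  - exists (j + 3), 1, 0; split => //; first lia.
      by rewrite /st eqxx.
    move=> i; rewrite /flip /st; bcase.
  - exists (j + 2), 1, 0; split => //; first lia.
      by rewrite eqxx.
    move=> i; rewrite /flip /E; bcase.
elim: k => [|k [IH1 IH2]]; first by split; apply: Hbase.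
split => //.
case: IH1 => C1 L1; case: IH2 => C2 L2.
rewrite A_rec; split; last first.
  rewrite last_cat /=. exact: L2.
apply: chainw_cat.
  rewrite /=; split.
  - exists (k + 4), (k + 3), (k + 2); split; try lia.
      rewrite /st; bcase.
    move=> i; rewrite /flip /st /addbit; bcase.
  - move=> i Hi; rewrite /st /addbit; bcase.
  - apply: (chainw_widen (w := (k + 5).+1)); first lia.
    apply: (chainw_addbit (w := k + 4)) => //; last exact: supp_st.
    lia.
rewrite /= last_map.
have HL : addbit (k + 5) (last (st k) (A k)) =1 addbit (k+5) E.
  by move=> i; rewrite /addbit L1.
split.
- apply: (step_ext (f := addbit (k + 5) E) (g := st k.+1)) => //.
  exists (k + 5), (k + 4), (k + 3); split; try lia.
    by rewrite /addbit eqxx.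
  move=> i; rewrite /flip /st /addbit /E; bcase.
- move=> i Hi; rewrite /st; bcase.
- apply: chainw_widen C2; lia.
Qed.

Lemma A_size k : 2 ^ (k %/ 2) <= size (A k) /\ 2 ^ (k.+1 %/ 2) <= size (A k.+1).
Proof.
elim: k => [|k [IH1 IH2]]; first by [].
split => //.
have -> : size (A k.+2) = size (A k) + size (A k.+1) + 2.
  by rewrite /= size_cat size_map /=; lia.
have -> : k.+2 %/ 2 = (k %/ 2).+1 by lia.
have : 2 ^ (k %/ 2) <= 2 ^ (k.+1 %/ 2) by rewrite leq_exp2l //; lia.
rewrite expnS; lia.
Qed.

Section S.
Variable m : nat.
Definition pj (j : 'I_(m + 1)) : nat := if val j == 0 then 2 ^ m else 2 ^ (val j).-1.
Definition sched (f : nat -> bool) : schedule 'I_(m + 1) :=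
  [ffun j : 'I_(m + 1) => (val j == 0) || f (val j).-1].

Lemma load_sched f b : load pj (sched f) b =
  (if b then 2 ^ m else 0) + \sum_(i < m) (if f i == b then 2 ^ i else 0).
Proof.
rewrite /load big_mkcond /=.
rewrite (eq_bigr (fun j : 'I_(m+1) => (fun x => if ((x == 0) || f x.-1) == b then
   (if x == 0 then 2 ^ m else 2 ^ x.-1) else 0) (val j))); last first.
  by move=> j _; rewrite ffunE.
rewrite -(big_mkord xpredT (fun x => if ((x == 0) || f x.-1) == b then
   (if x == 0 then 2 ^ m else 2 ^ x.-1) else 0)).
rewrite addn1 big_nat_recl //= big_mkord.
by case: b.
Qed.

Lemma sum_pow2 k : \sum_(i < k) 2 ^ i < 2 ^ k.
Proof.
elim: k => [|k IH]; first by rewrite big_ord0.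
rewrite big_ord_recr /= expnS. move: IH. set x := (\sum_(i < k) _). lia.
Qed.

Definition value (f : nat -> bool) := \sum_(i < m) (if f i then 2 ^ i else 0).

Lemma makespan_sched f : makespan pj (sched f) = 2 ^ m + value f.
Proof.
rewrite /makespan !load_sched /= add0n.
have -> : \sum_(i < m) (if f i == true then 2 ^ i else 0) = value f.
  by apply: eq_bigr => i _; rewrite eqb_id.
have : \sum_(i < m) (if f i == false then 2 ^ i else 0) <= \sum_(i < m) 2 ^ i.
  by apply: leq_sum => i _; case: ifP.
have := sum_pow2 m.
set x := \sum_(i < m) _. set y := \sum_(i < m) _.
move=> h1 h2; apply/maxn_idPl; lia.
Qed.

Lemma sum_ind t c : t < m -> \sum_(i < m) (if val i == t then c else 0) = c.
Proof.
move=> Ht; rewrite (bigD1 (Ordinal Ht)) //= eqxx big1 ?addn0 //.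
move=> i Hi; case: eqP => // He; case/eqP: Hi; exact: val_inj.
Qed.

Lemma pow_lt a b t : b < a -> a < t -> 2 ^ a + 2 ^ b < 2 ^ t.
Proof.
move=> H1 H2.
have h1 : 2 ^ b < 2 ^ a by rewrite ltn_exp2l.
have h2 : 2 ^ a.+1 <= 2 ^ t by rewrite leq_exp2l.
move: h2; rewrite expnS; lia.
Qed.

Lemma value_step (f g : nat -> bool) t a b : t < m -> b < a -> a < t -> f t ->
  g =1 flip f t a b -> value g < value f.
Proof.
move=> Htm H1 H2 H3 H4.
have Hle : value g + 2 ^ t <= value f + (2 ^ a + 2 ^ b).
  rewrite -(sum_ind (2 ^ t) Htm).
  rewrite -(sum_ind (2 ^ a) (ltn_trans H2 Htm)) -(sum_ind (2 ^ b) (ltn_trans H1 (ltn_trans H2 Htm))).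
  rewrite /value -!big_split /=; apply: leq_sum => i _.
  rewrite H4 /flip; move: (i : nat) => v.
  case Hv: (f v);
  case: (v =P t) => Ht; case: (v =P a) => Ha; case: (v =P b) => Hb => /=;
  idtac.
  all: try subst t; try subst a; try subst b; try lia.
have := pow_lt H1 H2; lia.
Qed.

Lemma step_improving f g : supp m f -> step f g -> improving_3swap pj (sched f) (sched g).
Proof.
move=> Hs [t [a [b [H1 H2 H3 H4]]]].
have Htm : t < m by rewrite ltnNge; apply/negP => /Hs; rewrite H3.
have Ham : a < m by lia.
have Hbm : b < m by lia.
have Ht1 : t.+1 < m + 1 by lia.
have Ha1 : a.+1 < m + 1 by lia.
have Hb1 : b.+1 < m + 1 by lia.
apply/existsP; exists (Ordinal Ht1 |: (Ordinal Ha1 |: [set Ordinal Hb1])).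
apply/and3P; split.
- rewrite !cardsU1 cards1 !in_setU1 !in_set1 -!val_eqE /=.
  have -> : (t.+1 == a.+1) = false by apply/eqP; lia.
  have -> : (t.+1 == b.+1) = false by apply/eqP; lia.
  have -> : (a.+1 == b.+1) = false by apply/eqP; lia.
  done.
- apply/eqP/ffunP => j; rewrite /swap !ffunE !in_setU1 !in_set1 -!val_eqE /=.
  case: j => [[|i] Hi] //=.
  by rewrite H4 /flip !eqSS orbA.
- rewrite !makespan_sched ltn_add2l; exact: value_step H4.
Qed.

Lemma chain_path f l : supp m f -> chainw m f l ->
  path (improving_3swap pj) (sched f) (map sched l).
Proof.
elim: l f => [|g l IH] f //= Hf [H1 H2 H3].
rewrite step_improving //=; exact: IH.
Qed.

Lemma opt_E : three_swap_optimal pj (sched E).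
Proof.
move=> S _.
rewrite makespan_sched /value big1 ?addn0; last by move=> i _.
have H0 : 0 < m + 1 by lia.
set s := swap _ _.
have : pj (Ordinal H0) <= load pj s (s (Ordinal H0)).
  rewrite /load (bigD1 (Ordinal H0)) //=; exact: leq_addr.
rewrite /pj /= /makespan; case: (s _) => H; lia.
Qed.
End S.

Theorem theorem5 :
  exists c N : nat, 0 < c /\
    forall n : nat, N <= n ->
      exists (p : 'I_(3 * n + 1) -> nat) (s0 : schedule 'I_(3 * n + 1))
             (ss : seq (schedule 'I_(3 * n + 1))),
        [/\ forall j, 0 < p j,
            path (improving_3swap p) s0 ss,
            2 ^ (n %/ c) <= size ss
          & three_swap_optimal p (last s0 ss)].
Proof.
exists 1, 4; split => // n Hn.
pose k := 3 * n - 4.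
have [[C L] _] := A_ok k.
have [Sz _] := A_size k.
exists (@pj (3 * n)), (sched (3 * n) (st k)), (map (sched (3 * n)) (A k)).
split.
- by move=> j; rewrite /pj; case: ifP => _; exact: expn_gt0.
- apply: chain_path.
    by move=> i Hi; apply: supp_st; rewrite /k; lia.
  by apply: chainw_widen C; rewrite /k; lia.
- rewrite size_map divn1; apply: leq_trans Sz; rewrite leq_exp2l //; rewrite /k; lia.
- rewrite last_map.
  have -> : sched (3 * n) (last (st k) (A k)) = sched (3 * n) E.
    by apply/ffunP => j; rewrite !ffunE L.
  exact: opt_E.
Qed.
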